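(* Let $F$ be a finite field, $m,n\ge1$, $T\in M_m(F)$, $S=\langle a_0,\dots,a_{n-1}\rangle\in F^n$, and let $f_T(\lambda)=\det(\lambda I_m-T)$, $f_S(\lambda)=a_0+a_1\lambda+\dots+a_{n-1}\lambda^{n-1}$. Let $f_{\langle T,S\rangle}(\lambda)=\sum_{i=0}^m c_i\lambda^{ni}f_S(\lambda)^{m-i}$, where $f_T=\sum_{i=0}^m c_i\lambda^i$ (this is the characteristic polynomial of the TSR step matrix $[\langle T,S\rangle]$). If $f_T$ is reducible over $F$, then $f_{\langle T,S\rangle}$ is reducible over $F$.
   Context: A polynomial over $F$ is reducible if it is a product of two polynomials of positive degree over $F$. *)

(* Defs.v *)
From HB Require Import structures.
From mathcomp Require Import all_boot all_order all_algebra.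
Set Implicit Arguments. Unset Strict Implicit. Unset Printing Implicit Defensive.
Import GRing.Theory.
Local Open Scope ring_scope.

(* A polynomial over F is reducible if it is a product of two polynomials of
   positive degree over F (degree = size - 1, so positive degree <-> 1 < size). *)
Definition reducible_poly (F : fieldType) (p : {poly F}) : Prop :=
  exists q r : {poly F}, (1 < size q)%N /\ (1 < size r)%N /\ p = q * r.

Definition f_S (F : fieldType) (n : nat) (S : 'rV[F]_n) : {poly F} :=
  \sum_(j < n) S 0 j *: 'X^j.

Definition f_TS (F : fieldType) (m n : nat) (T : 'M[F]_m) (S : 'rV[F]_n) : {poly F} :=
  \sum_(i < m.+1) (char_poly T)`_i *: ('X^(n * i) * f_S S ^+ (m - i)).

(* Main.v *)
Require Import Defs.
From HB Require Import structures.
From mathcomp Require Import all_boot all_order all_algebra.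
From mathcomp Require Import zify.
Local Open Scope ring_scope.
Import GRing.Theory.

Section Hom.
Variables (F : fieldType) (n : nat) (B : {poly F}).

Definition Mh (d i : nat) : {poly F} := 'X^(n * i) * B ^+ (d - i).
Definition hom (d : nat) (p : {poly F}) : {poly F} :=
  \sum_(i < d.+1) p`_i *: Mh d i.

Lemma hom0 d : hom d 0 = 0.
Proof. by rewrite /hom big1 // => i _; rewrite coef0 scale0r. Qed.

Lemma homD d p q : hom d (p + q) = hom d p + hom d q.
Proof. by rewrite /hom -big_split; apply: eq_bigr => i _; rewrite coefD scalerDl. Qed.

Lemma homZ d c p : hom d (c *: p) = c *: hom d p.
Proof. by rewrite /hom scaler_sumr; apply: eq_bigr => i _; rewrite coefZ scalerA. Qed.

Lemma homX d i : (i <= d)%N -> hom d 'X^i = Mh d i.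
Proof.
move=> le_id; rewrite /hom (bigD1 (Ordinal (le_id : (i < d.+1)%N) : 'I_d.+1)) //=.
rewrite coefXn eqxx scale1r big1 ?addr0 // => j ne_ji.
rewrite coefXn; case: eqP => [ej|]; last by rewrite scale0r.
by move: ne_ji; rewrite -val_eqE /= ej eqxx.
Qed.

Lemma hom_sum d (I : Type) (r : seq I) (G : I -> {poly F}) :
  hom d (\sum_(i <- r) G i) = \sum_(i <- r) hom d (G i).
Proof. exact: (big_morph (hom d) (homD d) (hom0 d)). Qed.

Lemma poly_expand (g : {poly F}) : g = \sum_(i < size g) g`_i *: 'X^i.
Proof. by rewrite -poly_def coefK. Qed.

Lemma homM k l (g h : {poly F}) : size g = k.+1 -> size h = l.+1 ->
  hom (k + l) (g * h) = hom k g * hom l h.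
Proof.
move=> sg sh.
have eg : g = \sum_(i < k.+1) g`_i *: 'X^i by rewrite -poly_def -sg coefK.
have eh : h = \sum_(i < l.+1) h`_i *: 'X^i by rewrite -poly_def -sh coefK.
rewrite {1}eg {1}eh.
rewrite mulr_suml (hom_sum (k+l) _ (index_enum _)) [hom k g]/hom [hom l h]/hom mulr_suml; apply: eq_bigr => i _.
rewrite mulr_sumr (hom_sum (k+l) _ (index_enum _)) mulr_sumr; apply: eq_bigr => j _.
rewrite -scalerAr -scalerAl scalerA homZ -exprD homX; last first.
  by have := ltn_ord i; have := ltn_ord j; lia.
rewrite -scalerAr -scalerAl scalerA; congr (_ *: _).
rewrite /Mh.
have -> : (k + l - (i + j) = (k - i) + (l - j))%N.
  by have := ltn_ord i; have := ltn_ord j; lia.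
rewrite mulnDr !exprD; set a := 'X^_; set b := 'X^_; set c := B ^+ _; set e := B ^+ _.
by rewrite mulrA -(mulrA a) (mulrC b) !mulrA.
Qed.

Lemma size_hom k (g : {poly F}) : (0 < n)%N -> (size B <= n)%N -> size g = k.+1 -> (0 < k)%N ->
  (1 < size (hom k g))%N.
Proof.
move=> n0 sB sg k0.
rewrite /hom big_ord_recr /= /Mh subnn expr0 mulr1.
have gk : g`_k != 0.
  have : lead_coef g != 0 by rewrite lead_coef_eq0 -size_poly_eq0 sg.
  by rewrite lead_coefE sg.
have szl : size (g`_k *: 'X^(n * k) : {poly F}) = (n * k).+1.
  by rewrite size_scale // size_polyXn.
rewrite addrC size_polyDl szl; first by rewrite ltnS muln_gt0 n0.
rewrite ltnS.
apply: (big_ind (fun p : {poly F} => size p <= n * k)%N).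
- by rewrite size_poly0.
- by move=> x y hx hy; apply: leq_trans (size_polyD _ _) _; rewrite geq_max hx hy.
move=> i _; apply: leq_trans (size_scale_leq _ _) _.
apply: leq_trans (size_polyMleq _ _) _.
rewrite size_polyXn.
have := size_poly_exp_leq B (k - i).
have := ltn_ord i.
move: sB n0; set s := size B; move=> sB n0 hi hexp.
move: hexp; set t := size (B ^+ _); move=> hexp.
have h1 : ((s.-1 * (k - i)) <= (n.-1 * (k - i)))%N.
  by apply: leq_mul => //; lia.
nia.
Qed.

End Hom.

Theorem mainTheorem2 (F : finFieldType) (m n : nat) (T : 'M[F]_m) (S : 'rV[F]_n) :
  (0 < m)%N -> (0 < n)%N ->
  reducible_poly (char_poly T) -> reducible_poly (f_TS T S).
Proof.
move=> m0 n0 [g [h [sg [sh eq]]]].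
have g0 : g != 0 by rewrite -size_poly_eq0; case: (size g) sg.
have h0 : h != 0 by rewrite -size_poly_eq0; case: (size h) sh.
set k := (size g).-1; set l := (size h).-1.
have sgk : size g = k.+1 by rewrite /k prednK // ltnW.
have shl : size h = l.+1 by rewrite /l prednK // ltnW.
have mkl : m = (k + l)%N.
  have := size_char_poly T; rewrite eq size_mul // sgk shl; lia.
have sB : (size (f_S S) <= n)%N.
  rewrite /f_S; apply: (big_ind (fun p : {poly F} => size p <= n)%N).
  - by rewrite size_poly0.
  - by move=> x y hx hy; apply: leq_trans (size_polyD _ _) _; rewrite geq_max hx hy.
  by move=> j _; apply: leq_trans (size_scale_leq _ _) _; rewrite size_polyXn.

exists (hom F n (f_S S) k g), (hom F n (f_S S) l h); split; last split.
- by apply: size_hom => //; rewrite /k; case: (size g) sg => // [[]].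
- by apply: size_hom => //; rewrite /l; case: (size h) sh => // [[]].
rewrite -homM // -eq -mkl /f_TS /hom; apply: eq_bigr => i _.
by rewrite /Mh.
Qed.
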